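(* Let $X$ and $Y$ be closed subsets of $\mathbb{R}^n$. If $X$, $Y$ and $X\cup Y$ are $\ell_1$-convex, then so is $X\cap Y$.
   Context: A subset $Z\subseteq\mathbb{R}^n$ is $\ell_1$-convex if for all $z,z'\in Z$, with $D=\sum_i|z_i-z'_i|$, there is $\gamma\colon[0,D]\to Z$ with $\gamma(0)=z,\gamma(D)=z'$ and $\sum_i|\gamma_i(t)-\gamma_i(t')|=|t-t'|$ for all $t,t'$. *)

(* Defs.v *)
(* Points of R^n are row vectors 'rV[R]_n with the
   canonical (product = Euclidean) topology of MathComp-Analysis. *)
From HB Require Import structures.
From mathcomp Require Import all_boot all_order all_algebra.
From mathcomp Require Import all_classical all_reals all_analysis.
Set Implicit Arguments. Unset Strict Implicit. Unset Printing Implicit Defensive.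
Import Order.TTheory GRing.Theory Num.Theory.
Import numFieldTopology.Exports.
Local Open Scope ring_scope.
Local Open Scope classical_set_scope.

Definition l1dist {R : realType} {n : nat} (z z' : 'rV[R]_n) : R :=
  \sum_(i < n) `|z ord0 i - z' ord0 i|.

Definition l1_convex {R : realType} {n : nat} (Z : set 'rV[R]_n) : Prop :=
  forall z z', Z z -> Z z' ->
    let D := l1dist z z' in
    exists gamma : R -> 'rV[R]_n,
      [/\ gamma 0 = z, gamma D = z',
          (forall t, 0 <= t <= D -> Z (gamma t)) &
          (forall t t', 0 <= t <= D -> 0 <= t' <= D ->
             l1dist (gamma t) (gamma t') = `|t - t'|)].

(* Main.v *)
Require Import Defs.
From HB Require Import structures.
From mathcomp Require Import all_boot all_order all_algebra.
From mathcomp Require Import all_classical all_reals all_analysis.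
From mathcomp Require Import ring lra.
Import numFieldTopology.Exports.
Local Open Scope classical_set_scope.
Import Order.TTheory GRing.Theory Num.Theory.
Local Open Scope ring_scope.

Lemma closed_approx (R: realType) n (S : set 'rV[R]_n) (a : 'rV[R]_n) : closed S ->
  (forall e, 0 < e -> exists c, S c /\ forall j, `|a ord0 j - c ord0 j| < e) -> S a.
Proof.
move=> cS H. have -> : S = closure S by apply/closure_id.
move=> B /nbhs_ballP [e e0 sub].
have [c [Sc Hc]] := H e e0. exists c; split => //. apply: sub.
split => // i j. rewrite (ord1 i). rewrite /ball /=. exact: Hc.
Qed.

Lemma abs_cases {R : realType} (x : R) : (0 <= x /\ `|x| = x) \/ (x < 0 /\ `|x| = - x).
Proof.
case: (lerP 0 x) => h; [left; split=> //; exact: ger0_norm| right; split=> //; exact: ltr0_norm].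
Qed.

Definition uc {R : realType} {n} (o : 'rV[R]_n) (sg : 'I_n -> R) (p : 'rV[R]_n) i :=
  sg i * (p ord0 i - o ord0 i).
Definition ole {R : realType} {n} (o : 'rV[R]_n) (sg : 'I_n -> R) (p q : 'rV[R]_n) :=
  forall i, uc o sg p i <= uc o sg q i.
Definition sgok {R : realType} {n} (sg : 'I_n -> R) := forall i, sg i = 1 \/ sg i = -1.

Lemma ole_refl {R : realType} {n} o sg (p : 'rV[R]_n) : ole o sg p p.
Proof. by move=> i. Qed.
Lemma ole_trans {R : realType} {n} o sg (p q r : 'rV[R]_n) :
  ole o sg p q -> ole o sg q r -> ole o sg p r.
Proof. by move=> h1 h2 i; apply: le_trans (h1 i) (h2 i). Qed.

Lemma uc_diff {R : realType} {n} o sg (p q : 'rV[R]_n) i : sgok sg ->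
  `|uc o sg p i - uc o sg q i| = `|p ord0 i - q ord0 i|.
Proof.
move=> hs; rewrite /uc -mulrBr (_ : p ord0 i - o ord0 i - (q ord0 i - o ord0 i) = p ord0 i - q ord0 i); last by ring.
rewrite normrM.
by case: (hs i) => ->; rewrite ?normrN normr1 mul1r.
Qed.

Lemma l1dist_uc {R : realType} {n} o sg (p q : 'rV[R]_n) : sgok sg ->
  l1dist p q = \sum_i `|uc o sg p i - uc o sg q i|.
Proof. by move=> hs; rewrite /l1dist; apply: eq_bigr => i _; rewrite uc_diff. Qed.
Arguments l1dist_uc {R n} o {sg p q}.

Lemma uc_inj {R : realType} {n} o sg (p q : 'rV[R]_n) : sgok sg ->
  (forall i, uc o sg p i = uc o sg q i) -> p = q.
Proof.
move=> hs h; apply/rowP => i; change (p ord0 i = q ord0 i).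
have := h i; rewrite /uc; case: (hs i) => ->; rewrite ?mul1r ?mulN1r.
  by move/(congr1 (fun x => x + o ord0 i)); rewrite !subrK.
by move/oppr_inj/(congr1 (fun x => x + o ord0 i)); rewrite !subrK.
Qed.

Lemma uc_mk {R : realType} {n} o sg (f : 'I_n -> R) : sgok sg ->
  exists p : 'rV[R]_n, forall i, uc o sg p i = f i.
Proof.
move=> hs; exists (\row_i (o ord0 i + sg i * f i)) => i.
rewrite /uc mxE addrAC subrr add0r mulrA.
by case: (hs i) => ->; rewrite ?mulN1r ?opprK ?mul1r.
Qed.

Lemma uc_rev {R : realType} {n} (z z' : 'rV[R]_n) sg p i :
  uc z' (fun i => - sg i) p i = uc z sg z' i - uc z sg p i.
Proof. rewrite /uc. ring. Qed.

Lemma sgok_rev {R : realType} {n} (sg : 'I_n -> R) : sgok sg -> sgok (fun i => - sg i).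
Proof. by move=> hs i; case: (hs i) => ->; [right|left; rewrite opprK]. Qed.

Lemma sum_termwise {R : realType} {n} (F G : 'I_n -> R) :
  (forall i, F i <= G i) -> \sum_i F i = \sum_i G i -> forall i, F i = G i.
Proof.
move=> hle heq i.
have := @psumr_eq0P R _ predT (fun i => G i - F i).
move=> /(_ _ _ i isT) => h.
apply/eqP; rewrite eq_sym -subr_eq0; apply/eqP; apply: h.
  by move=> j _; rewrite subr_ge0.
by rewrite sumrB heq subrr.
Qed.

Lemma pos_sum_ex {R : realType} {n} (F : 'I_n -> R) :
  0 < \sum_i F i -> exists i, 0 < F i.
Proof.
move=> h; apply: contrapT => hn.
have : \sum_i F i <= \sum_(i < n) (0:R).
  apply: ler_sum => i _.
  by rewrite leNgt; apply/negP => hi; apply: hn; exists i.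
by rewrite big1_eq leNgt h.
Qed.

Lemma coord_le_sum {R : realType} {n} (F : 'I_n -> R) j :
  (forall i, 0 <= F i) -> F j <= \sum_i F i.
Proof.
move=> h; rewrite (bigD1 j) //= lerDl; apply: sumr_ge0 => i _; exact: h.
Qed.

Lemma l1dist_ge0 {R : realType} {n} (p q : 'rV[R]_n) : 0 <= l1dist p q.
Proof. by apply: sumr_ge0 => i _. Qed.

Lemma uc_le_l1 {R : realType} {n} o sg (p q : 'rV[R]_n) i : sgok sg ->
  `|uc o sg p i - uc o sg q i| <= l1dist p q.
Proof. by move=> hs; rewrite (l1dist_uc o hs); apply: coord_le_sum. Qed.

Lemma coord_le_l1 {R : realType} {n} (p q : 'rV[R]_n) i :
  `|p ord0 i - q ord0 i| <= l1dist p q.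
Proof. exact: (coord_le_sum (fun i => `|p ord0 i - q ord0 i|)). Qed.

Lemma l1dist_sym {R : realType} {n} (p q : 'rV[R]_n) : l1dist p q = l1dist q p.
Proof. by apply: eq_bigr => i _; rewrite distrC. Qed.

Lemma dist_ole {R : realType} {n} o sg (p q : 'rV[R]_n) : sgok sg -> ole o sg p q ->
  l1dist p q = \sum_i (uc o sg q i - uc o sg p i).
Proof.
move=> hs h; rewrite (l1dist_uc o hs); apply: eq_bigr => i _.
by rewrite distrC ger0_norm // subr_ge0.
Qed.

Arguments uc_le_l1 {R n} o {sg p q}.
Arguments dist_ole {R n} o {sg p q}.
Lemma btw_gen {R : realType} {n} o sg (x w y : 'rV[R]_n) : sgok sg ->
  l1dist x w + l1dist w y = l1dist x y -> forall i,
  `|uc o sg x i - uc o sg w i| + `|uc o sg w i - uc o sg y i| = `|uc o sg x i - uc o sg y i|.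
Proof.
move=> hs; rewrite !(l1dist_uc o hs) -big_split /= => h i.
symmetry; apply: (@sum_termwise R n (fun i => `|uc o sg x i - uc o sg y i|)
  (fun i => `|uc o sg x i - uc o sg w i| + `|uc o sg w i - uc o sg y i|) _ (esym h)).
by move=> j; apply: ler_distD.
Qed.
Arguments btw_gen {R n} o {sg x w y}.

Lemma btw_ole {R : realType} {n} o sg (p w q : 'rV[R]_n) : sgok sg -> ole o sg p q ->
  l1dist p w + l1dist w q = l1dist p q -> ole o sg p w /\ ole o sg w q.
Proof.
move=> hs hpq h; have := btw_gen o hs h => E; split => i; have := E i; have := hpq i;
 case: (abs_cases (uc o sg p i - uc o sg w i)) => [[h1 ->]|[h1 ->]];
 case: (abs_cases (uc o sg w i - uc o sg q i)) => [[h2 ->]|[h2 ->]];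
 case: (abs_cases (uc o sg p i - uc o sg q i)) => [[h3 ->]|[h3 ->]]; lra.
Qed.

Lemma abs_lb {R : realType} (a : R) : a <= `|a| /\ - a <= `|a|.
Proof. by split; [apply: ler_norm | rewrite -normrN; apply: ler_norm]. Qed.

Lemma geo_dist {R : realType} {n} (p q : 'rV[R]_n) (g : R -> 'rV[R]_n) t :
  g 0 = p -> g (l1dist p q) = q ->
  (forall t t', 0 <= t <= l1dist p q -> 0 <= t' <= l1dist p q ->
     l1dist (g t) (g t') = `|t - t'|) ->
  0 <= t <= l1dist p q -> l1dist p (g t) = t /\ l1dist (g t) q = l1dist p q - t.
Proof.
move=> h0 hd hi ht; have d0 := l1dist_ge0 p q.
have h00 : 0 <= (0:R) <= l1dist p q by apply/andP; split.
have hdd : 0 <= l1dist p q <= l1dist p q by apply/andP; split.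
have e1 := hi 0 t h00 ht; rewrite h0 in e1.
have e2 := hi t _ ht hdd; rewrite hd in e2.
rewrite e1 e2; case/andP: ht => t0 td; split.
  by rewrite sub0r normrN ger0_norm.
by rewrite distrC ger0_norm // subr_ge0.
Qed.
Arguments geo_dist {R n p q g t}.

Lemma meet_XY {R : realType} {n} (X Y : set 'rV[R]_n) x y :
  closed X -> closed Y -> l1_convex (X `|` Y) -> X x -> Y y ->
  exists w, [/\ X w, Y w & l1dist x w + l1dist w y = l1dist x y].
Proof.
move=> cX cY cv Xx Yy.
have [g [h0 hd hin hi]] := cv x y (or_introl Xx) (or_intror Yy).
have d0 : 0 <= l1dist x y := l1dist_ge0 x y.
have lip : forall t t' j, 0 <= t <= l1dist x y -> 0 <= t' <= l1dist x y ->
    `|g t ord0 j - g t' ord0 j| <= `|t - t'|.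
  by move=> t t' j ht ht'; rewrite -(hi t t' ht ht'); apply: coord_le_l1.
pose T := [set t | (0 <= t <= l1dist x y) /\ Y (g t)].
have Td : T (l1dist x y) by split; [apply/andP; split | rewrite hd].
have lbT : lbound T 0 by move=> t [/andP[]].
have hlT : has_lbound T by exists 0.
have neT : T !=set0 by exists (l1dist x y).
have t0ge : 0 <= inf T := lb_le_inf neT lbT.
have t0lb : lbound T (inf T) := ge_inf hlT.
have t0le : inf T <= l1dist x y := t0lb _ Td.
have ht0 : 0 <= inf T <= l1dist x y by rewrite t0ge t0le.
have Yw : Y (g (inf T)).
  apply: closed_approx cY _ => e e0.
  have [t Tt tlt] := @inf_adherent _ T e e0 (conj neT hlT).
  exists (g t); split; first by case: Tt.
  move=> j; apply: le_lt_trans (lip _ _ j ht0 (proj1 Tt)) _.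
  have := t0lb _ Tt => h.
  rewrite distrC ger0_norm ?subr_ge0 //; lra.
have Xw : X (g (inf T)).
  case: (eqVneq (inf T) 0) => [->|t0n]; first by rewrite h0.
  have t0p : 0 < inf T by rewrite lt_def t0n t0ge.
  apply: closed_approx cX _ => e e0.
  have key : forall t, 0 <= t < inf T -> inf T - t < e ->
      exists c, X c /\ forall j, `|g (inf T) ord0 j - c ord0 j| < e.
    move=> t /andP[tge tlt] te.
    have htd : 0 <= t <= l1dist x y.
      by rewrite tge /=; apply: ltW; apply: lt_le_trans tlt t0le.
    exists (g t); split.
      case: (hin t htd) => // Yt.
      have : inf T <= t := t0lb _ (conj htd Yt).
      by move=> h; have := lt_le_trans tlt h; rewrite ltxx.
    move=> j; apply: le_lt_trans (lip _ _ j ht0 htd) _.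
    rewrite ger0_norm; [lra | by rewrite subr_ge0 ltW].
  case: (lerP (e/2) (inf T)) => he.
    by apply: (key (inf T - e/2)); [apply/andP; split; lra | lra].
  by apply: (key 0); [apply/andP; split; lra | lra].
exists (g (inf T)); split => //.
have [e1 e2] := geo_dist h0 hd hi ht0.
by rewrite e1 e2 addrC subrK.
Qed.
Arguments meet_XY {R n X Y x y}.

Lemma exists_eps {R : realType} {n} (f : 'I_n -> R) (d : R) : 0 < d ->
  exists e, [/\ 0 < e, e <= d & forall i, f i <= 0 \/ e < f i].
Proof.
move=> d0.
suff : forall s : seq 'I_n, exists e, [/\ 0 < e, e <= d &
    forall i, i \in s -> f i <= 0 \/ e < f i].
  move=> /(_ (enum 'I_n)) [e [e0 ed he]]; exists e; split => // i.
  by apply: he; rewrite mem_enum.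
elim => [|x s [e [e0 ed he]]]; first by exists d; split.
case: (lerP (f x) 0) => hx.
  by exists e; split => // i; rewrite in_cons => /orP[/eqP -> | /he //]; left.
exists (Num.min e (f x / 2)); split.
- by rewrite lt_min e0 divr_gt0.
- by rewrite ge_min ed.
- move=> i; rewrite in_cons => /orP[/eqP -> | /he [h|h]]; [right | by left | right].
    by rewrite gt_min; apply/orP; right; lra.
  by rewrite gt_min h.
Qed.

Lemma gap {R : realType} {n} (X Y : set 'rV[R]_n) o sg p q : sgok sg ->
  closed X -> closed Y -> l1_convex X -> l1_convex Y -> l1_convex (X `|` Y) ->
  X p -> Y p -> X q -> Y q -> ole o sg p q -> 0 < l1dist p q ->
  exists r, [/\ X r, Y r, ole o sg p r, ole o sg r q & 0 < l1dist p r /\ 0 < l1dist r q].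
Proof.
move=> hs cX cY cvX cvY cvU Xp Yp Xq Yq hpq dpos.
have [e [e0 ed he]] := exists_eps (fun i => uc o sg q i - uc o sg p i) _ dpos.
have [g [g0 gd gin gi]] := cvX p q Xp Xq.
have [h [h0 hd hin hi]] := cvY p q Yp Yq.
have he1 : 0 <= e <= l1dist p q by rewrite (ltW e0) ed.
have he2 : 0 <= l1dist p q - e <= l1dist p q by apply/andP; split; lra.
have [dpx dxq] := geo_dist g0 gd gi he1.
have [dpy dyq] := geo_dist h0 hd hi he2.
have Xx : X (g e) := gin _ he1. have Yy : Y (h (l1dist p q - e)) := hin _ he2.
have [oxp oxq] : ole o sg p (g e) /\ ole o sg (g e) q.
  by apply: btw_ole => //; rewrite dpx dxq addrC subrK.
have [opy oyq] : ole o sg p (h (l1dist p q - e)) /\ ole o sg (h (l1dist p q - e)) q.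
  by apply: btw_ole => //; rewrite dpy dyq addrC subrK.
move: dpx dxq dpy dyq Xx Yy oxp oxq opy oyq.
set x := g e; set y := h (l1dist p q - e) => dpx dxq dpy dyq Xx Yy oxp oxq opy oyq.
have [w [Xw Yw dw]] := meet_XY cX cY cvU Xx Yy.
have E := btw_gen o hs dw.
have bw : forall i, uc o sg p i <= uc o sg w i /\ uc o sg w i <= uc o sg q i.
  move=> i; have := E i; have := oxp i; have := oxq i; have := opy i; have := oyq i.
  have [a1 a2] := abs_lb (uc o sg x i - uc o sg w i).
  have [b1 b2] := abs_lb (uc o sg w i - uc o sg y i).
  case: (abs_cases (uc o sg x i - uc o sg y i)) => [[h3 ->]|[h3 ->]];
  move=> *; split; lra.
exists w; split => //; first by move=> i; case: (bw i).
  by move=> i; case: (bw i).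
split.
- have : 0 < \sum_i `|uc o sg p i - uc o sg x i| by rewrite -(l1dist_uc o hs) dpx.
  move=> /pos_sum_ex [i hi0].
  have hyq := @uc_le_l1 R n o sg y q i hs; rewrite dyq in hyq.
  rewrite lt_def l1dist_ge0 andbT; apply/eqP => hz.
  have hpw := @uc_le_l1 R n o sg p w i hs; rewrite hz in hpw.
  have := E i; have := he i; have := oxp i; have := oxq i; have := opy i; have := oyq i.
  have [bw1 bw2] := bw i.
  move: hi0 hyq hpw.
  have -> : `|uc o sg p i - uc o sg x i| = uc o sg x i - uc o sg p i.
    by rewrite distrC ger0_norm // subr_ge0; apply: oxp.
  have -> : `|uc o sg y i - uc o sg q i| = uc o sg q i - uc o sg y i.
    by rewrite distrC ger0_norm // subr_ge0; apply: oyq.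
  have -> : `|uc o sg p i - uc o sg w i| = uc o sg w i - uc o sg p i.
    by rewrite distrC ger0_norm // subr_ge0.
  move=> *.
  have [a1 a2] := abs_lb (uc o sg x i - uc o sg w i).
  have [b1 b2] := abs_lb (uc o sg w i - uc o sg y i).
  case: (abs_cases (uc o sg x i - uc o sg y i)) => [[h3 h4]|[h3 h4]];
  case: (he i) => *; lra.
- have : 0 < \sum_i `|uc o sg y i - uc o sg q i| by rewrite -(l1dist_uc o hs) dyq; lra.
  move=> /pos_sum_ex [i hi0].
  have hpx := @uc_le_l1 R n o sg p x i hs; rewrite dpx in hpx.
  rewrite lt_def l1dist_ge0 andbT; apply/eqP => hz.
  have hwq := @uc_le_l1 R n o sg w q i hs; rewrite hz in hwq.
  have := E i; have := he i; have := oxp i; have := oxq i; have := opy i; have := oyq i.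
  have [bw1 bw2] := bw i.
  move: hi0 hpx hwq.
  have -> : `|uc o sg y i - uc o sg q i| = uc o sg q i - uc o sg y i.
    by rewrite distrC ger0_norm // subr_ge0; apply: oyq.
  have -> : `|uc o sg p i - uc o sg x i| = uc o sg x i - uc o sg p i.
    by rewrite distrC ger0_norm // subr_ge0; apply: oxp.
  have -> : `|uc o sg w i - uc o sg q i| = uc o sg q i - uc o sg w i.
    by rewrite distrC ger0_norm // subr_ge0.
  move=> *.
  have [a1 a2] := abs_lb (uc o sg x i - uc o sg w i).
  have [b1 b2] := abs_lb (uc o sg w i - uc o sg y i).
  case: (abs_cases (uc o sg x i - uc o sg y i)) => [[h3 h4]|[h3 h4]];
  case: (he i) => *; lra.
Qed.

Lemma sup_pt {R : realType} {n} o sg (B : set 'rV[R]_n) (M : 'I_n -> R) : sgok sg ->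
  B !=set0 -> total_on B (ole o sg) -> (forall c i, B c -> uc o sg c i <= M i) ->
  exists a, [/\ forall c, B c -> ole o sg c a,
     (forall e, 0 < e -> exists c, B c /\ forall i, uc o sg a i - uc o sg c i < e) &
     forall d, (forall c, B c -> ole o sg c d) -> ole o sg a d].
Proof.
move=> hs neB tot bnd.
pose f i := sup [set uc o sg c i | c in B].
have hsup : forall i, has_sup [set uc o sg c i | c in B].
  move=> i; split.
    by case: neB => c Bc; exists (uc o sg c i); exists c.
  by exists (M i) => _ [c Bc <-]; apply: bnd.
have [a ha] := uc_mk o sg f hs.
exists a; split.
- move=> c Bc i; rewrite ha; apply: sup_upper_bound => //; by exists c.
- move=> e e0.
  suff : forall s : seq 'I_n, exists c, B c /\ forall i, i \in s -> f i - e < uc o sg c i.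
    move=> /(_ (enum 'I_n)) [c [Bc hc]]; exists c; split => // i.
    have := hc i; rewrite mem_enum => /(_ isT); rewrite ha; lra.
  elim => [|j s [c [Bc hc]]].
    by case: neB => c Bc; exists c; split.
  have [_ [c' Bc' <-] hj] := sup_adherent e0 (hsup j).
  case: (tot c c' Bc Bc') => hcc.
  + exists c'; split => // i; rewrite in_cons => /orP[/eqP -> // | /hc h].
    exact: lt_le_trans h (hcc i).
  + exists c; split => // i; rewrite in_cons => /orP[/eqP -> | /hc //].
    exact: lt_le_trans hj (hcc j).
- move=> d hd i; rewrite ha; apply: ge_sup.
    by case: neB => c Bc; exists (uc o sg c i); exists c.
  by move=> _ [c Bc <-]; apply: hd.
Qed.

Lemma ole_rev {R : realType} {n} (z z' : 'rV[R]_n) sg p q :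
  ole z' (fun i => - sg i) p q <-> ole z sg q p.
Proof. by split => h i; have := h i; rewrite !(uc_rev z); lra. Qed.

Lemma chain_level {R : realType} {n} (X Y : set 'rV[R]_n) (z z' : 'rV[R]_n) sg (A : set 'rV[R]_n) :
  sgok sg -> closed X -> closed Y -> l1_convex X -> l1_convex Y -> l1_convex (X `|` Y) ->
  (forall c, A c -> [/\ X c, Y c, ole z sg z c & ole z sg c z']) ->
  total_on A (ole z sg) ->
  (forall r, [/\ X r, Y r, ole z sg z r & ole z sg r z'] ->
     (forall c, A c -> ole z sg c r \/ ole z sg r c) -> A r) ->
  A z -> A z' ->
  forall t, 0 <= t <= \sum_i uc z sg z' i -> exists c, A c /\ \sum_i uc z sg c i = t.
Proof.
move=> hs cX cY cvX cvY cvU AS Atot add Az Az' t /andP[t0 tD].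
pose L c := \sum_i uc z sg c i.
have uz : forall i, uc z sg z i = 0 by move=> i; rewrite /uc subrr mulr0.
have Lz : L z = 0 by rewrite /L; apply: big1 => i _; exact: uz.
have Lmono : forall c c', ole z sg c c' -> L c <= L c'.
  by move=> c c' h; apply: ler_sum => i _; apply: h.
have Leq : forall c c', ole z sg c c' -> L c' <= L c -> ole z sg c' c.
  move=> c c' h hl.
  have E : forall i, uc z sg c i = uc z sg c' i.
    apply: sum_termwise => //; apply/eqP; rewrite eq_le; apply/andP; split;
      [exact: Lmono | exact: hl].
  by move=> i; rewrite E.
have approx : forall a, (forall e, 0 < e -> exists c, A c /\ forall i,
    `|uc z sg a i - uc z sg c i| < e) -> X a /\ Y a.
  move=> a ha; split.
    apply: closed_approx cX _ => e e0; have [c [Ac hc]] := ha e e0.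
    by exists c; split; [case: (AS c Ac) | move=> j; rewrite -(uc_diff z sg _ _ _ hs)].
  apply: closed_approx cY _ => e e0; have [c [Ac hc]] := ha e e0.
  by exists c; split; [case: (AS c Ac) | move=> j; rewrite -(uc_diff z sg _ _ _ hs)].
pose Lo := [set c | A c /\ L c <= t].
pose Up := [set c | A c /\ t <= L c].
have Loz : Lo z by split => //; rewrite Lz.
have Upz' : Up z' by split.
have [a [a1 a2 a3]] := @sup_pt R n z sg Lo (uc z sg z') hs (ex_intro _ z Loz)
   (fun c c' hc hc' => Atot c c' (proj1 hc) (proj1 hc'))
   (fun c i hc => match AS c (proj1 hc) with And4 _ _ _ h => h i end).
have hs' := sgok_rev sg hs.
have [b [b1 b2 b3]] := @sup_pt R n z' (fun i => - sg i) Up (uc z' (fun i => - sg i) z) hs'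
   (ex_intro _ z' Upz')
   (fun c c' hc hc' => match Atot c c' (proj1 hc) (proj1 hc') with
      | or_introl h => or_intror (proj2 (ole_rev z z' sg c' c) h)
      | or_intror h => or_introl (proj2 (ole_rev z z' sg c c') h) end)
   (fun c i hc => match AS c (proj1 hc) with And4 _ _ h _ =>
       ltac:(rewrite !(uc_rev z); have := h i; rewrite uz; lra) end).
have b1' : forall c, Up c -> ole z sg b c.
  by move=> c hc; apply/(ole_rev z z'); apply: b1.
have b2' : forall e, 0 < e -> exists c, Up c /\ forall i, uc z sg c i - uc z sg b i < e.
  move=> e e0; have [c [hc hc']] := b2 e e0; exists c; split => // i.
  by have := hc' i; rewrite !(uc_rev z); lra.
have b3' : forall d, (forall c, Up c -> ole z sg d c) -> ole z sg d b.
  move=> d hd; apply/(ole_rev z z'); apply: b3 => c hc; apply/(ole_rev z z').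
  exact: hd.
have Sa : [/\ X a, Y a, ole z sg z a & ole z sg a z'].
  have [Xa Ya] : X a /\ Y a.
    apply: approx => e e0; have [c [[Ac Lc] hc]] := a2 e e0; exists c; split => // i.
    rewrite ger0_norm; first exact: hc.
    by rewrite subr_ge0; apply: a1.
  split => //; first exact: a1.
  by apply: a3 => c [Ac _]; case: (AS c Ac).
have Sb : [/\ X b, Y b, ole z sg z b & ole z sg b z'].
  have [Xb Yb] : X b /\ Y b.
    apply: approx => e e0; have [c [[Ac Lc] hc]] := b2' e e0; exists c; split => // i.
    rewrite distrC ger0_norm; first exact: hc.
    by rewrite subr_ge0; apply: b1'.
  split => //; last exact: b1'.
  by apply: b3' => c [Ac _]; case: (AS c Ac).
have Aa : A a.
  apply: add => // c Ac; case: (lerP (L c) t) => hc; first by left; apply: a1.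
  right; apply: a3 => c' [Ac' hc']; case: (Atot c' c Ac' Ac) => // h.
  by have := Lmono _ _ h; lra.
have La : L a <= t.
  rewrite leNgt; apply/negP => hlt.
  have npos : (0 : R) < n.+1%:R by rewrite ltr0n.
  pose e := (L a - t) / n.+1%:R.
  have e0 : 0 < e by rewrite divr_gt0 // subr_gt0.
  have [c [[Ac Lc] hc]] := a2 e e0.
  have h1 : L a - L c <= e *+ n.
    rewrite /L -sumrB; apply: le_trans (@ler_sum _ _ _ _ _ (fun _ => e) _) _.
      by move=> i _; apply: ltW.
    by rewrite sumr_const card_ord.
  have h2 : e *+ n.+1 = L a - t by rewrite -mulr_natr divfK // gt_eqF.
  rewrite mulrS in h2; lra.
have Lb : t <= L b.
  rewrite leNgt; apply/negP => hlt.
  have npos : (0 : R) < n.+1%:R by rewrite ltr0n.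
  pose e := (t - L b) / n.+1%:R.
  have e0 : 0 < e by rewrite divr_gt0 // subr_gt0.
  have [c [[Ac Lc] hc]] := b2' e e0.
  have h1 : L c - L b <= e *+ n.
    rewrite /L -sumrB; apply: le_trans (@ler_sum _ _ _ _ _ (fun _ => e) _) _.
      by move=> i _; apply: ltW.
    by rewrite sumr_const card_ord.
  have h2 : e *+ n.+1 = t - L b by rewrite -mulr_natr divfK // gt_eqF.
  rewrite mulrS in h2; lra.
case: (eqVneq (L a) t) => [Lat | Lant]; first by exists a.
have Lalt : L a < t by rewrite lt_neqAle Lant La.
have hab : ole z sg a b.
  apply: a3 => c [Ac Lc]; apply: b3' => c' [Ac' Lc'].
  case: (Atot c c' Ac Ac') => // h.
  by apply: (Leq _ _ h); lra.
have dab : 0 < l1dist a b.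
  rewrite (dist_ole z hs hab) sumrB; change (0 < L b - L a); lra.
have [Xa Ya _ _] := Sa. have [Xb Yb _ _] := Sb.
have [r [Xr Yr oar orb [dar drb]]] := @gap R n X Y z sg a b hs cX cY cvX cvY cvU Xa Ya Xb Yb hab dab.
have Ar : A r.
  apply: add.
    split => //; [apply: ole_trans oar; by case: Sa | apply: ole_trans orb _; by case: Sb].
  move=> c Ac; case: (lerP (L c) t) => hc.
    by left; apply: ole_trans oar; apply: a1.
  by right; apply: ole_trans orb _; apply: b1'; split => //; apply: ltW.
exfalso; case: (lerP (L r) t) => hr.
  have hra := a1 r (conj Ar hr).
  have : l1dist a r = 0.
    rewrite (dist_ole z hs oar); apply: big1 => i _.
    by have := oar i; have := hra i; lra.
  by move=> h; rewrite h ltxx in dar.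
have hbr := b1' r (conj Ar (ltW hr)).
have : l1dist r b = 0.
  rewrite (dist_ole z hs orb); apply: big1 => i _.
  by have := orb i; have := hbr i; lra.
by move=> h; rewrite h ltxx in drb.
Qed.

Theorem lemma1p13 (R : realType) (n : nat) (X Y : set 'rV[R]_n) :
  closed X -> closed Y ->
  l1_convex X -> l1_convex Y -> l1_convex (X `|` Y) ->
  l1_convex (X `&` Y).
Proof.
move=> cX cY cvX cvY cvU; rewrite /l1_convex => z z' hz hz' /=.
have [Xz Yz] := hz; have [Xz' Yz'] := hz'.
pose sg := fun i => if z ord0 i <= z' ord0 i then (1:R) else -1.
have hs : sgok sg by move=> i; rewrite /sg; case: ifP => _; [left|right].
have uz : forall i, uc z sg z i = 0 by move=> i; rewrite /uc subrr mulr0.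
have hzz : ole z sg z z'.
  move=> i; rewrite uz /uc /sg; case: ifP => h.
    by rewrite mul1r subr_ge0.
  by rewrite mulN1r oppr_ge0 subr_le0; apply: ltW; rewrite ltNge h.
pose S := fun c => [/\ X c, Y c, ole z sg z c & ole z sg c z'].
have [A [[AS Atot] Amax]] := @Zorn_bigcup _
    (fun C => C `<=` S /\ total_on C (ole z sg)) (fun F FP Ftot =>
  conj (fun c hc => match hc with ex_intro2 C FC Cc => proj1 (FP C FC) c Cc end)
   (fun c c' hc hc' => match hc, hc' with ex_intro2 C FC Cc, ex_intro2 C' FC' Cc' =>
      match Ftot C C' FC FC' with
      | or_introl sub => proj2 (FP C' FC') c c' (sub c Cc) Cc'
      | or_intror sub => proj2 (FP C FC) c c' Cc (sub c' Cc') end end)).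
have add : forall r, S r -> (forall c, A c -> ole z sg c r \/ ole z sg r c) -> A r.
  move=> r Sr hr; apply: contrapT => nAr.
  apply: (Amax (A `|` [set r])).
    split; first by move=> c Ac; left.
    by move=> sub; apply: nAr; apply: (sub r); right.
  split.
    by move=> c [Ac| ->]; [apply: AS | ].
  move=> c c' [Ac| ->] [Ac'| ->].
  - by apply: Atot.
  - exact: hr.
  - by case: (hr c' Ac') => h; [right|left].
  - by left; apply: ole_refl.
have Az : A z.
  apply: add; first by split => //; apply: ole_refl.
  by move=> c Ac; right; case: (AS c Ac).
have Az' : A z'.
  apply: add; first by split => //; apply: ole_refl.
  by move=> c Ac; left; case: (AS c Ac).
have key := @chain_level R n X Y z z' sg A hs cX cY cvX cvY cvU AS Atot add Az Az'.
pose L c := \sum_i uc z sg c i.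
have Lmono : forall c c', ole z sg c c' -> L c <= L c'.
  by move=> c c' h; apply: ler_sum => i _; apply: h.
have hD : l1dist z z' = L z'.
  by rewrite (dist_ole z hs hzz); apply: eq_bigr => i _; rewrite uz subr0.
have distA : forall c c', A c -> A c' -> l1dist c c' = `|L c - L c'|.
  move=> c c' Ac Ac'; case: (Atot c c' Ac Ac') => h.
    by rewrite (dist_ole z hs h) sumrB distrC ger0_norm // subr_ge0; exact: Lmono.
  by rewrite l1dist_sym (dist_ole z hs h) sumrB ger0_norm // subr_ge0; exact: Lmono.
pose gamma t := xget z [set c | A c /\ L c = t].
have gP : forall t, 0 <= t <= L z' -> A (gamma t) /\ L (gamma t) = t.
  move=> t ht; have [c hc] := key t ht.
  have := @xgetPex _ z [set c | A c /\ L c = t] (ex_intro _ c hc).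
  by rewrite /gamma /=.
have D0 : 0 <= L z' by rewrite -hD; apply: l1dist_ge0.
exists gamma; rewrite hD; split.
- have [A0 L0] := gP 0 (ltac:(by apply/andP; split)).
  apply: (uc_inj z sg _ _ hs) => i.
  have [_ _ box _] := AS _ A0.
  have hsum : \sum_i uc z sg z i = \sum_i uc z sg (gamma 0) i.
    by rewrite -/(L (gamma 0)) L0; apply: big1 => j _; exact: uz.
  by symmetry; apply: (@sum_termwise R n _ _ box hsum i).
- have [A1 L1] := gP (L z') (ltac:(by apply/andP; split)).
  apply: (uc_inj z sg _ _ hs) => i.
  have [_ _ _ box] := AS _ A1.
  have hsum : \sum_i uc z sg (gamma (L z')) i = \sum_i uc z sg z' i.
    by rewrite -/(L (gamma (L z'))) L1.
  by apply: (@sum_termwise R n _ _ box hsum i).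
- by move=> t ht; have [At _] := gP t ht; have [Xt Yt _ _] := AS _ At; split.
- move=> t t' ht ht'; have [At Lt] := gP t ht; have [At' Lt'] := gP t' ht'.
  by rewrite distA // Lt Lt'.
Qed.
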